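(* In Ruleset A, for any superposition of single Nim heaps whose largest heap has size $k\ge1$, $\langle \mathrm{Nim}(i_1),\ldots,\mathrm{Nim}(i_\ell)\rangle_A\equiv *(k-1)$, where $k=\max_{1\le j\le \ell} i_j$.
   Context: Single-heap Nim: $\mathrm{Nim}(x)$ is a heap of $x$ tokens; classical move $(1,-j)$, $j\ge1$, removes $j$ tokens and is illegal if fewer than $j$ tokens remain. Quantum variation: a position is a nonempty finite set $\langle G_1,\ldots,G_n\rangle$ of classical positions; a classical move is legal if legal in some $G_i$; a Q-move is a nonempty set of legal classical moves $\{m_1,\ldots,m_k\}$, leading to the superposition of all legal results of applying some $m_j$ to some $G_i$. Ruleset A (subscript $A$): only Q-moves consisting of at least two distinct classical moves are allowed. The player with no allowed Q-move loses. $\equiv$ is game equivalence (same outcome in every disjunctive sum), and $*k$ is the value of a classical Nim heap of $k$ tokens ($*0=0$). *)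

(* Defs.v *)
From mathcomp Require Import all_boot.
Set Implicit Arguments. Unset Strict Implicit. Unset Printing Implicit Defensive.

Inductive igame : Type := IG : seq igame -> igame.

(* Disjunctive sum: a move is a move in exactly one component. *)
Fixpoint gadd (G H : igame) {struct G} : igame :=
  match G with IG gs =>
    let fix addr (H : igame) : igame :=
      match H with IG hs => IG (map (fun g => gadd g H) gs ++ map addr hs) end
    in addr H
  end.

Fixpoint gwin (G : igame) : bool :=
  match G with IG gs => has (fun g => ~~ gwin g) gs end.

Definition gequiv (G H : igame) : Prop := forall X, gwin (gadd G X) = gwin (gadd H X).

Fixpoint nimopts (k : nat) : seq igame :=
  match k with 0 => [::] | k'.+1 => IG (nimopts k') :: nimopts k' end.
Definition nim (k : nat) : igame := IG (nimopts k).

Fixpoint subseqs (s : seq nat) : seq (seq nat) :=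
  match s with
  | [::] => [:: [::]]
  | x :: s' => let r := subseqs s' in r ++ map (cons x) r
  end.

(* A quantum position of single-heap Nim: a nonempty finite set of heap sizes,
   represented by a list S (only membership matters). *)
Definition qmax (S : seq nat) : nat := \max_(i <- S) i.

(* Ruleset A Q-moves: sets M of at least two distinct classical moves (1,-j),
   each legal in some heap, i.e. 1 <= j <= max S. *)
Definition qmovesA (S : seq nat) : seq (seq nat) :=
  [seq M <- subseqs (iota 1 (qmax S)) | 2 <= size M].

Definition qresult (S M : seq nat) : seq nat :=
  undup (flatten [seq [seq i - j | j <- M & j <= i] | i <- S]).

Fixpoint qtreeA (fuel : nat) (S : seq nat) : igame :=
  match fuel with
  | 0 => IG [::]
  | n.+1 => IG [seq qtreeA n (qresult S M) | M <- qmovesA S]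
  end.

(* The game tree of the superposition <Nim(i) | i in S>_A (max strictly decreases
   along every move, so fuel qmax S + 1 suffices). *)
Definition qnimA (S : seq nat) : igame := qtreeA (qmax S).+1 S.

(* Main.v *)
Require Import Defs.
From mathcomp Require Import all_boot.
From mathcomp Require Import zify.

Definition igame_ind2 (P : igame -> Prop)
  (H : forall gs, (forall g, List.In g gs -> P g) -> P (IG gs)) : forall G, P G :=
  fix F G := match G with IG gs => H gs
    ((fix aux l : forall g, List.In g l -> P g :=
       match l with
       | nil => fun g (hi : List.In g nil) => False_ind _ hi
       | cons x l' => fun g hi => match hi with
                      | or_introl e => eq_ind x P (F x) g e
                      | or_intror h => aux l' g h end
       end) gs) end.

Lemma has_In (T : Type) (p : pred T) s : has p s <-> exists x, List.In x s /\ p x.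
Proof.
elim: s => [|y s IH] /=; first by split => // [[x []]].
split.
  case/orP => [py|/IH [x [hx px]]]; first by exists y; auto.
  by exists x; auto.
move=> [x [[<-|hx] px]]; first by rewrite px.
by apply/orP; right; apply/IH; exists x.
Qed.

Lemma has_ext_In (T : Type) (p q : pred T) s :
  (forall x, List.In x s -> p x = q x) -> has p s = has q s.
Proof.
elim: s => //= y s IH H; rewrite H /=; last by left.
by rewrite IH // => x hx; apply: H; right.
Qed.

Lemma gadd_IG gs hs :
  gadd (IG gs) (IG hs) = IG (map (fun g => gadd g (IG hs)) gs ++ map (gadd (IG gs)) hs).
Proof. by []. Qed.

Lemma gwin_add gs hs :
  gwin (gadd (IG gs) (IG hs)) =
  has (fun g => ~~ gwin (gadd g (IG hs))) gs || has (fun h => ~~ gwin (gadd (IG gs) h)) hs.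
Proof. by rewrite gadd_IG /= has_cat !has_map. Qed.

Lemma nimopts_In n g : List.In g (nimopts n) <-> exists a, a < n /\ g = nim a.
Proof.
elim: n g => [|n IH] g /=; first by split => // [[a []]].
split.
  case=> [<-|/IH [a [ha ->]]]; first by exists n.
  by exists a; split => //; apply: ltnW.
move=> [a [ha ->]]; rewrite ltnS leq_eqVlt in ha.
case/orP: ha => [/eqP ->|ha]; first by left.
by right; apply/IH; exists a.
Qed.

Lemma mex (gs : seq igame) n :
  (forall g, List.In g gs -> exists a, a < n /\ gequiv g (nim a)) ->
  (forall a, a < n -> exists g, List.In g gs /\ gequiv g (nim a)) ->
  gequiv (IG gs) (nim n).
Proof.
move=> H1 H2 X; elim/igame_ind2: X => xs IH.
rewrite /nim !gwin_add; congr orb; last first.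
  by apply: has_ext_In => x hx; rewrite IH.
apply/idP/idP.
  move/has_In => [g [hg pg]]; have [a [ha e]] := H1 g hg.
  apply/has_In; exists (nim a); split; first by apply/nimopts_In; exists a.
  by rewrite -e.
move/has_In => [g [/nimopts_In [a [ha ->]] pg]]; have [g' [hg e]] := H2 a ha.
by apply/has_In; exists g'; split => //; rewrite e.
Qed.
Set Implicit Arguments.

Lemma qmax_cons x s : qmax (x :: s) = maxn x (qmax s).
Proof. by rewrite /qmax big_cons. Qed.

Lemma le_qmax x s : x \in s -> x <= qmax s.
Proof. by move=> h; exact: (@leq_bigmax_seq _ s xpredT (fun i => i) x h). Qed.

Lemma qmax_le s B : (forall x, x \in s -> x <= B) -> qmax s <= B.
Proof. by move=> h; apply/bigmax_leqP_seq => i hi _; apply: h. Qed.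

Lemma qmax_mem s : 0 < qmax s -> qmax s \in s.
Proof.
elim: s => [|x s IH]; first by rewrite /qmax big_nil.
rewrite qmax_cons inE /maxn; case: ifP => hp h.
  by rewrite (IH (leq_ltn_trans (leq0n x) hp)) orbT.
by rewrite eqxx.
Qed.

Lemma subseqs_sub M s : M \in subseqs s -> subseq M s.
Proof.
elim: s M => [|x s IH] M /=; first by rewrite inE => /eqP ->.
rewrite mem_cat => /orP [/IH h|/mapP [M' /IH h ->]].
  exact: (subseq_trans h (subseq_cons s x)).
by rewrite eqxx.
Qed.

Lemma sub_subseqs M s : subseq M s -> M \in subseqs s.
Proof.
elim: s M => [|x s IH] M.
  by case: M => //= _; rewrite inE.
case: M => [|y M] /= h; rewrite mem_cat; apply/orP.
  by left; apply: IH; exact: sub0seq.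
move: h; case: eqP => [-> h|_ h].
  by right; apply/mapP; exists M => //; apply: IH.
by left; apply: IH.
Qed.

Lemma qresultP S M x :
  x \in qresult S M <-> exists i j, [/\ i \in S, j \in M, j <= i & x = i - j].
Proof.
rewrite /qresult mem_undup; split.
  case/flattenP => t /mapP [i hi ->] /mapP [j]; rewrite mem_filter => /andP [hj1 hj2] ->.
  by exists i, j.
move=> [i [j [hi hj hji ->]]]; apply/flattenP.
exists [seq i - j0 | j0 <- M & j0 <= i]; first by apply/mapP; exists i.
by apply/mapP; exists j => //; rewrite mem_filter hji.
Qed.

Lemma qmovesA_P S M : M \in qmovesA S ->
  [/\ uniq M, 2 <= size M & forall j, j \in M -> 1 <= j <= qmax S].
Proof.
rewrite mem_filter => /andP [hs /subseqs_sub hsub]; split => //.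
  exact: subseq_uniq hsub (iota_uniq _ _).
by move=> j /(mem_subseq hsub); rewrite mem_iota; lia.
Qed.

Lemma opt_bounds S M : 0 < qmax S -> M \in qmovesA S ->
  0 < qmax (qresult S M) < qmax S.
Proof.
move=> hk /qmovesA_P [hu hsz hM].
have hmem := @qmax_mem S hk.
have [j hj hjk] : exists2 j, j \in M & j < qmax S.
  case: M hu hsz hM => [|a [|b M]] //= /andP [hab _] _ hM.
  have ha : 0 < a <= qmax S by apply: hM; rewrite inE eqxx.
  have hb : 0 < b <= qmax S by apply: hM; rewrite !inE eqxx orbT.
  have hne : a != b by move: hab; rewrite inE negb_or => /andP [].
  case: (ltnP a (qmax S)) => h1; first by exists a; rewrite ?inE ?eqxx.
  exists b; first by rewrite !inE eqxx orbT.
  move: hne; rewrite neq_ltn; lia.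
apply/andP; split.
  have := hM j hj => hj1.
  have hin : qmax S - j \in qresult S M.
    by apply/qresultP; exists (qmax S), j; split => //; lia.
  have := @le_qmax _ _ hin; lia.
have : qmax (qresult S M) <= (qmax S).-1; last by lia.
apply: qmax_le => x /qresultP [i [j' [hi hj' hji ->]]].
have := @le_qmax _ _ hi; have := hM j' hj'; lia.
Qed.

Lemma opt_exists S a : a < (qmax S).-1 ->
  exists2 M, M \in qmovesA S & qmax (qresult S M) = a.+1.
Proof.
move=> ha; set k := qmax S.
have hk : 0 < k by lia.
exists [:: k - a.+1; k].
  rewrite mem_filter /=; apply: sub_subseqs.
  have e : qmax S = (k - a.+1) + a.+1 by rewrite -/k; lia.
  rewrite e iotaD -cat1s; apply: cat_subseq; rewrite sub1seq mem_iota; lia.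
apply/eqP; rewrite eqn_leq; apply/andP; split.
  apply: qmax_le => x /qresultP [i [j [hi hj hji ->]]].
  have := @le_qmax _ _ hi; rewrite -/k; move: hj; rewrite !inE => /orP [] /eqP ->; lia.
rewrite {1}(_ : a.+1 = k - (k - a.+1)); last by lia.
apply: le_qmax; apply/qresultP; exists k, (k - a.+1); split => //.
- exact: qmax_mem.
- by rewrite inE eqxx.
- lia.
Qed.

Lemma mainA n : forall S, qmax S < n -> 0 < qmax S ->
  gequiv (qtreeA n S) (nim (qmax S).-1).
Proof.
elim: n => [|n IH] S hn hk //=.
apply: mex.
  move=> g /List.in_map_iff [M [<- hM]].
  have hM' : M \in qmovesA S.
    elim: (qmovesA S) hM => //= y l IHl [->|h]; rewrite inE ?eqxx //.
    by rewrite IHl ?orbT.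
  have /andP [h1 h2] := @opt_bounds S M hk hM'.
  exists (qmax (qresult S M)).-1; split; first by lia.
  by apply: IH; lia.
move=> a ha; have [M hM e] := @opt_exists S a ha.
exists (qtreeA n (qresult S M)); split.
  apply/List.in_map_iff; exists M; split => //.
  elim: (qmovesA S) hM => //= y l IHl; rewrite inE => /orP [/eqP ->|h]; first by left.
  by right; apply: IHl.
have /andP [h1 h2] := @opt_bounds S M hk hM.
have := IH (qresult S M); rewrite e /=; apply; lia.
Qed.

Theorem lemma1 (s : seq nat) :
  s != [::] -> 1 <= \max_(i <- s) i ->
  gequiv (qnimA s) (nim (\max_(i <- s) i).-1).
Proof.
move=> _ hk; exact: (@mainA (qmax s).+1 s (ltnSn _) hk).
Qed.
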